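(* Let $n>m\geq 2$ and let $X$ be a random variable on $\mathcal{X}=\{x_1,\ldots,x_n\}$ with distribution $\mathbf{p}=(p_1,\ldots,p_n)$, where $p_1\geq\cdots\geq p_n\geq 0$. Then for every $f\in\mathcal{F}_m$, $$H(f(X))\leq H(R_m(\mathbf{p})).$$
   Context: $H$ is Shannon entropy in bits. $\mathcal{F}_m$ is the set of surjective functions from $\mathcal{X}$ onto a fixed $m$-element set. Definition of $R_m(\mathbf{p})=(r_1,\ldots,r_m)$: if $p_1<1/m$, then $R_m(\mathbf{p})=(1/m,\ldots,1/m)$. If $p_1\geq 1/m$, let $i^*$ be the maximum index $i\in\{1,\ldots,m-1\}$ with $p_i\geq \frac{\sum_{j=i+1}^n p_j}{m-i}$. Then $r_i=p_i$ for $i\leq i^*$ and $r_i=\frac{\sum_{j=i^*+1}^n p_j}{m-i^*}$ for $i=i^*+1,\ldots,m$. *)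

(* Defs.v *)
From Stdlib Require Import Reals Lra Lia Arith.
Open Scope R_scope.

Fixpoint fsum (n : nat) (g : nat -> R) : R :=
  match n with
  | O => 0
  | S k => fsum k g + g k
  end.

Definition plog2 (x : R) : R :=
  if Rlt_dec 0 x then x * (ln x / ln 2) else 0.

Definition entropy (k : nat) (q : nat -> R) : R :=
  - fsum k (fun j => plog2 (q j)).

Definition pushforward (n : nat) (p : nat -> R) (f : nat -> nat) (j : nat) : R :=
  fsum n (fun i => if Nat.eq_dec (f i) j then p i else 0).

Definition surj_onto (n m : nat) (f : nat -> nat) : Prop :=
  (forall i, (i < n)%nat -> (f i < m)%nat) /\
  (forall j, (j < m)%nat -> exists i, (i < n)%nat /\ f i = j).

Definition tail (n : nat) (p : nat -> R) (i : nat) : R :=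
  fsum n p - fsum i p.

(* Paper's condition for 1-indexed i: p_i >= (sum_{j=i+1}^n p_j)/(m-i);
   0-indexed: p (i-1) >= tail n p i / (m-i), checked below with i = S k'. *)
Fixpoint istar_search (n m : nat) (p : nat -> R) (k : nat) : nat :=
  match k with
  | O => O
  | S k' => if Rge_dec (p k') (tail n p (S k') / INR (m - S k'))
            then S k' else istar_search n m p k'
  end.

Definition istar (n m : nat) (p : nat -> R) : nat :=
  istar_search n m p (m - 1).

(* R_m(p) = (r_1,...,r_m), here 0-indexed as r 0 .. r (m-1). *)
Definition Rm (n m : nat) (p : nat -> R) (i : nat) : R :=
  if Rlt_dec (p 0%nat) (1 / INR m) then 1 / INR m
  else let k := istar n m p in
       if Nat.ltb i k then p i else tail n p k / INR (m - k).

(* Main.v *)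
Require Import Defs.
From Stdlib Require Import Reals Lra Lia Arith.
Open Scope R_scope.

Lemma fsum_ext n g h : (forall i, (i < n)%nat -> g i = h i) -> fsum n g = fsum n h.
Proof. induction n; simpl; intros H; [reflexivity|]. rewrite IHn by (intros; apply H; lia). rewrite H by lia. reflexivity. Qed.

Lemma fsum_le n g h : (forall i, (i < n)%nat -> g i <= h i) -> fsum n g <= fsum n h.
Proof. induction n; simpl; intros H; [lra|]. assert (H1 := H n ltac:(lia)). assert (fsum n g <= fsum n h) by (apply IHn; intros; apply H; lia). lra. Qed.

Lemma fsum_plus n g h : fsum n (fun i => g i + h i) = fsum n g + fsum n h.
Proof. induction n; simpl; [lra|]. rewrite IHn. lra. Qed.

Lemma fsum_scal n a g : fsum n (fun i => a * g i) = a * fsum n g.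
Proof. induction n; simpl; [lra|]. rewrite IHn. lra. Qed.

Lemma fsum_const n c : fsum n (fun _ => c) = INR n * c.
Proof. induction n; simpl fsum; [simpl; lra|]. rewrite IHn, S_INR. lra. Qed.

Lemma fsum_split a b g : fsum (a + b) g = fsum a g + fsum b (fun i => g (a + i)%nat).
Proof. induction b; simpl. rewrite Nat.add_0_r; lra. rewrite Nat.add_succ_r; simpl. rewrite IHb. lra. Qed.

Lemma fsum_swap n m F : fsum n (fun i => fsum m (fun j => F i j)) = fsum m (fun j => fsum n (fun i => F i j)).
Proof.
  induction n; simpl.
  - induction m; simpl; [lra|]. rewrite <- IHm. lra.
  - rewrite IHn. rewrite <- fsum_plus. reflexivity.
Qed.

Lemma fsum_nonneg n g : (forall i, (i < n)%nat -> 0 <= g i) -> 0 <= fsum n g.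
Proof. intros H. apply Rle_trans with (fsum n (fun _ => 0)). rewrite fsum_const; lra. apply fsum_le. auto. Qed.

Lemma fsum_ge_term n g i : (forall i, (i < n)%nat -> 0 <= g i) -> (i < n)%nat -> g i <= fsum n g.
Proof.
  induction n; intros H Hi; [lia|]. simpl.
  destruct (Nat.eq_dec i n) as [->|Hne].
  - assert (0 <= fsum n g) by (apply fsum_nonneg; intros; apply H; lia). lra.
  - assert (g i <= fsum n g) by (apply IHn; [intros; apply H; lia| lia]). assert (0 <= g n) by (apply H; lia). lra.
Qed.

Lemma fsum_ind m a x : (a < m)%nat -> fsum m (fun j => if Nat.eq_dec a j then x else 0) = x.
Proof.
  induction m; intros H; [lia|]. simpl.
  destruct (Nat.eq_dec a m) as [->|Hne].
  - rewrite (fsum_ext m _ (fun _ => 0)). rewrite fsum_const; lra.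
    intros i Hi. destruct (Nat.eq_dec m i); [lia|auto].
  - rewrite IHm by lia. lra.
Qed.

Lemma ln_le' x y : 0 < x -> x <= y -> ln x <= ln y.
Proof. intros Hx Hxy. destruct (Req_dec x y) as [->|Hne]; [lra|]. left; apply ln_increasing; lra. Qed.

Lemma ln_le_sub1 y : 0 < y -> ln y <= y - 1.
Proof. intros Hy. assert (H := exp_ineq1_le (ln y)). rewrite exp_ln in H; lra. Qed.

Definition pl (x : R) : R := if Rlt_dec 0 x then x * ln x else 0.

Lemma fsum_plog2 k q : fsum k (fun j => plog2 (q j)) = fsum k (fun j => pl (q j)) / ln 2.
Proof.
  unfold Rdiv. rewrite Rmult_comm, <- fsum_scal. apply fsum_ext. intros i _.
  unfold plog2, pl. destruct (Rlt_dec 0 (q i)); lra.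
Qed.

Lemma ln2_pos : 0 < ln 2.
Proof. assert (H := ln_lt_2). lra. Qed.

Lemma gibbs_term q s : 0 <= q -> 0 <= s -> (0 < q -> 0 < s) -> q * ln s - pl q <= s - q.
Proof.
  intros Hq Hs Hqs. unfold pl. destruct (Rlt_dec 0 q) as [Hq'|Hq'].
  - assert (Hs' := Hqs Hq'). assert (H := ln_le_sub1 (s / q) ltac:(apply Rdiv_lt_0_compat; lra)).
    unfold Rdiv in H; rewrite ln_mult, ln_Rinv in H by (try apply Rinv_0_lt_compat; lra).
    assert (q * (ln s - ln q) <= q * (s / q - 1)) by (apply Rmult_le_compat_l; lra).
    replace (q * (s / q - 1)) with (s - q) in H0 by (field; lra). lra.
  - assert (q = 0) by lra. subst. lra.
Qed.

Lemma fsum_pos_ex n g : 0 < fsum n g -> exists i, (i < n)%nat /\ 0 < g i.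
Proof.
  induction n; simpl; intros H; [lra|].
  destruct (Rlt_dec 0 (g n)) as [Hp|Hp]; [exists n; split; [lia|auto]|].
  destruct IHn as [i [Hi Hg]]; [lra|]. exists i; split; [lia|auto].
Qed.

Lemma tail_split n p k : (k <= n)%nat -> tail n p k = fsum (n - k) (fun i => p (k + i)%nat).
Proof.
  intros H. unfold tail. replace n with (k + (n - k))%nat at 1 by lia. rewrite fsum_split. lra.
Qed.

Lemma main_gen n m p f k c :
 (k <= m)%nat -> (k <= n)%nat -> 0 <= c ->
 (forall i, (i<n)%nat -> 0 <= p i) ->
 (forall i, (i<k)%nat -> c <= p i) ->
 (forall i, (i<n)%nat -> (f i < m)%nat) ->
 fsum n p = 1 ->
 tail n p k = INR (m-k) * c ->
 fsum m (fun j => pl (if Nat.ltb j k then p j else c)) <= fsum m (fun j => pl (pushforward n p f j)).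
Proof.
  intros Hkm Hkn Hc Hp Hpc Hf Hsum Htail.
  set (q := pushforward n p f).
  set (s := fun j => c + fsum k (fun i => if Nat.eq_dec (f i) j then p i - c else 0)).
  assert (Hq0 : forall j, 0 <= q j).
  { intros j. apply fsum_nonneg. intros i Hi. destruct (Nat.eq_dec (f i) j); auto; lra. }
  assert (Hs0 : forall j, c <= s j).
  { intros j. unfold s. assert (0 <= fsum k (fun i => if Nat.eq_dec (f i) j then p i - c else 0)); [|lra].
    apply fsum_nonneg. intros i Hi. destruct (Nat.eq_dec (f i) j); [assert (H := Hpc i Hi); lra|lra]. }
  assert (Hsp : forall i, (i < k)%nat -> p i <= s (f i)).
  { intros i Hi. unfold s.
    assert (H := fsum_ge_term k (fun i' => if Nat.eq_dec (f i') (f i) then p i' - c else 0) i).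
    simpl in H. destruct (Nat.eq_dec (f i) (f i)); [|congruence].
    assert (p i - c <= fsum k (fun i' => if Nat.eq_dec (f i') (f i) then p i' - c else 0)); [|lra].
    apply H; auto. intros i' Hi'. destruct (Nat.eq_dec (f i') (f i)); [assert (H' := Hpc i' Hi'); lra|lra]. }
  assert (Htge : forall i, (k <= i < n)%nat -> p i <= tail n p k).
  { intros i Hi. rewrite tail_split by lia.
    assert (H := fsum_ge_term (n - k) (fun i' => p (k + i')%nat) (i - k)).
    simpl in H. replace (k + (i - k))%nat with i in H by lia. apply H; [intros; apply Hp; lia|lia]. }
  assert (Hcpos : forall i, (k <= i < n)%nat -> 0 < p i -> 0 < c).
  { intros i Hi Hpi. assert (H := Htge i Hi). rewrite Htail in H.
    destruct (Req_dec c 0) as [->|]; [lra|lra]. }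
  assert (Hqs : forall j, 0 < q j -> 0 < s j).
  { intros j Hqj. destruct (fsum_pos_ex _ _ Hqj) as [i [Hi Hg]].
    destruct (Nat.eq_dec (f i) j) as [<-|]; [|lra].
    destruct (Nat.lt_ge_cases i k) as [Hik|Hik].
    - assert (H := Hsp i Hik). lra.
    - assert (H := Hcpos i ltac:(lia) Hg). assert (H' := Hs0 (f i)). lra. }
  assert (Hsumq : fsum m q = 1).
  { unfold q, pushforward. rewrite <- fsum_swap. rewrite <- Hsum. apply fsum_ext.
    intros i Hi. apply fsum_ind. auto. }
  assert (Hsums : fsum m s = 1).
  { unfold s. rewrite fsum_plus, fsum_const. rewrite <- fsum_swap.
    rewrite (fsum_ext k _ (fun i => p i - c)).
    2:{ intros i Hi. apply fsum_ind. apply Hf; lia. }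
    replace (fsum k (fun i => p i - c)) with (fsum k p + fsum k (fun _ => - c))
      by (rewrite <- fsum_plus; apply fsum_ext; intros; lra).
    rewrite fsum_const.
    unfold tail in Htail. rewrite minus_INR in Htail by lia. lra. }
  assert (Hg : fsum m (fun j => q j * ln (s j)) <= fsum m (fun j => pl (q j))).
  { apply Rle_trans with (fsum m (fun j => pl (q j) + (s j + - q j))).
    - apply fsum_le. intros j Hj. assert (H := gibbs_term (q j) (s j) (Hq0 j) ltac:(assert (H := Hs0 j); lra) (Hqs j)). lra.
    - rewrite !fsum_plus. rewrite (fsum_ext m (fun j => - q j) (fun j => -1 * q j)) by (intros; lra).
      rewrite fsum_scal. lra. }
  assert (H2 : fsum m (fun j => q j * ln (s j)) = fsum n (fun i => p i * ln (s (f i)))).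
  { rewrite (fsum_ext m _ (fun j => fsum n (fun i => if Nat.eq_dec (f i) j then p i * ln (s (f i)) else 0))).
    - rewrite <- fsum_swap. apply fsum_ext. intros i Hi. apply fsum_ind. auto.
    - intros j Hj. unfold q, pushforward. rewrite Rmult_comm, <- fsum_scal. apply fsum_ext.
      intros i Hi. destruct (Nat.eq_dec (f i) j) as [<-|]; lra. }
  assert (H3 : fsum k (fun i => pl (p i)) + tail n p k * ln c <= fsum n (fun i => p i * ln (s (f i)))).
  { replace (fsum n (fun i => p i * ln (s (f i)))) with (fsum (k + (n - k)) (fun i => p i * ln (s (f i))))
      by (f_equal; lia).
    rewrite fsum_split. apply Rplus_le_compat.
    - apply fsum_le. intros i Hi. unfold pl. destruct (Rlt_dec 0 (p i)) as [Hpi|Hpi].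
      + apply Rmult_le_compat_l; [lra|]. apply ln_le'; auto.
      + assert (p i = 0) by (assert (H := Hp i ltac:(lia)); lra). rewrite H; lra.
    - rewrite tail_split by lia. rewrite Rmult_comm, <- fsum_scal. apply fsum_le. intros i Hi.
      destruct (Rlt_dec 0 (p (k + i)%nat)) as [Hpi|Hpi].
      + assert (Hc' := Hcpos (k + i)%nat ltac:(lia) Hpi). rewrite Rmult_comm.
        apply Rmult_le_compat_l; [lra|]. apply ln_le'; auto.
      + assert (p (k + i)%nat = 0) by (assert (H := Hp (k + i)%nat ltac:(lia)); lra). rewrite H; lra. }
  assert (H4 : fsum m (fun j => pl (if Nat.ltb j k then p j else c)) = fsum k (fun i => pl (p i)) + tail n p k * ln c).
  { replace (fsum m (fun j => pl (if Nat.ltb j k then p j else c))) with (fsum (k + (m - k)) (fun j => pl (if Nat.ltb j k then p j else c)))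
      by (f_equal; lia).
    rewrite fsum_split. f_equal.
    - apply fsum_ext. intros i Hi. apply Nat.ltb_lt in Hi. rewrite Hi. reflexivity.
    - rewrite (fsum_ext _ _ (fun _ => pl c)). rewrite fsum_const, Htail. unfold pl.
      destruct (Rlt_dec 0 c). lra. assert (c = 0) by lra. subst. lra.
      intros i Hi. replace (Nat.ltb (k + i) k) with false; auto. symmetry; apply Nat.ltb_ge; lia. }
  lra.
Qed.

Lemma istar_prop n m p K : (istar_search n m p K <= K)%nat /\
  (istar_search n m p K = 0%nat \/
   p (istar_search n m p K - 1)%nat >= tail n p (istar_search n m p K) / INR (m - istar_search n m p K)).
Proof.
  induction K; simpl; [split; [lia|left; reflexivity]|].
  destruct (Rge_dec (p K) (tail n p (S K) / INR (m - S K))) as [H|H].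
  - split; [lia|right]. replace (S K - 1)%nat with K by lia. exact H.
  - destruct IHK as [H1 H2]. split; [lia|exact H2].
Qed.

Lemma mono n p : (forall i, (S i < n)%nat -> p (S i) <= p i) ->
  forall d i, (i + d < n)%nat -> p (i + d)%nat <= p i.
Proof.
  intros Hm d. induction d; intros i Hi. rewrite Nat.add_0_r; lra.
  rewrite Nat.add_succ_r. assert (H := Hm (i + d)%nat ltac:(lia)). assert (H' := IHd i ltac:(lia)). lra.
Qed.

Theorem corollary3 (n m : nat) (p : nat -> R) (f : nat -> nat) :
  (2 <= m)%nat -> (m < n)%nat ->
  (forall i, (i < n)%nat -> 0 <= p i) ->
  (forall i, (S i < n)%nat -> p (S i) <= p i) ->
  fsum n p = 1 ->
  surj_onto n m f ->
  entropy m (pushforward n p f) <= entropy m (Rm n m p).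
Proof.
  intros Hm Hmn Hp Hmono Hsum [Hf _].
  unfold entropy. rewrite !fsum_plog2.
  assert (Hl := ln2_pos).
  assert (HINRm : 0 < INR m) by (apply lt_0_INR; lia).
  enough (fsum m (fun j => pl (Rm n m p j)) <= fsum m (fun j => pl (pushforward n p f j))).
  { unfold Rdiv. assert (0 < / ln 2) by (apply Rinv_0_lt_compat; lra).
    apply Ropp_le_contravar. apply Rmult_le_compat_r; lra. }
  unfold Rm. destruct (Rlt_dec (p 0%nat) (1 / INR m)) as [Hlt|Hge].
  - apply Rle_trans with (fsum m (fun j => pl (if Nat.ltb j 0 then p j else 1 / INR m))).
    + right. apply fsum_ext. intros j _. reflexivity.
    + apply main_gen; auto; try lia.
      all: try (apply Rlt_le, Rdiv_lt_0_compat; lra).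
      all: try (intros; lia).
      * unfold tail. simpl. rewrite Nat.sub_0_r, Hsum. field. lra.
  - set (k := istar n m p). cbv zeta.
    destruct (istar_prop n m p (m - 1)) as [Hk Hk2]. fold (istar n m p) in Hk, Hk2. fold k in Hk, Hk2.
    assert (Hmk : 0 < INR (m - k)) by (apply lt_0_INR; lia).
    assert (Htl : 0 <= tail n p k).
    { rewrite tail_split by lia. apply fsum_nonneg. intros; apply Hp; lia. }
    apply main_gen; auto; try lia.
    + unfold Rdiv; apply Rmult_le_pos; [lra|]; apply Rlt_le, Rinv_0_lt_compat; lra.
    + intros i Hi. destruct Hk2 as [Hk2|Hk2]; [lia|].
      assert (H := mono n p Hmono (k - 1 - i)%nat i ltac:(lia)).
      replace (i + (k - 1 - i))%nat with (k - 1)%nat in H by lia. lra.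
    + field. lra.
Qed.
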